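(* In the deterministic 4-user relay network described in the context (uplink gains $n_{tR}\geq n_{uR}\geq n_{vR}\geq n_{wR}$, downlink gains $n_{Ra}\geq n_{Rb}\geq n_{Rc}\geq n_{Rd}$, $\{t,u,v,w\}=\{a,b,c,d\}=\{1,2,3,4\}$), let $n^*=\min(n_{tR},n_{Ra})$ and, for distinct $p,q,r$, $\Phi(p,q,r)=\max\{R_{pq}+R_{pr}+\max(R_{qr},R_{rq}),\ R_{qp}+R_{qr}+\max(R_{pr},R_{rp}),\ R_{rp}+R_{rq}+\max(R_{pq},R_{qp})\}$ and $\Psi(p,q,r)=\max\{R_{qp}+R_{rp}+\max(R_{qr},R_{rq}),\ R_{pq}+R_{rq}+\max(R_{pr},R_{rp}),\ R_{pr}+R_{qr}+\max(R_{pq},R_{qp})\}$. Then the Simple Ordering Scheme (SOS) achieves every nonnegative integer rate tuple $(R_{ij})_{i\neq j\in\{1,2,3,4\}}$ that satisfies all of the inequalities $R_{wt}+R_{wu}+R_{wv}\leq n_{wR}$; $R_{ad}+R_{bd}+R_{cd}\leq n_{Rd}$; $R_{wt}+R_{wu}+R_{vt}+R_{vu}+\max(R_{vw},R_{wv})\leq n_{vR}$; $R_{ad}+R_{bd}+R_{ac}+R_{bc}+\max(R_{cd},R_{dc})\leq n_{Rc}$; $R_{ut}+R_{vt}+R_{wt}+\Phi(u,v,w)\leq n_{uR}$; $R_{tu}+R_{tv}+R_{tw}+\Phi(u,v,w)\leq n_{tR}$; $R_{ut}+R_{uv}+R_{uw}+\Phi(t,v,w)\leq n_{tR}$; $R_{vt}+R_{vu}+R_{vw}+\Phi(t,u,w)\leq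 n_{tR}$; $R_{wt}+R_{wu}+R_{wv}+\Phi(t,u,v)\leq n_{tR}$; $R_{ab}+R_{ac}+R_{ad}+\Psi(b,c,d)\leq n_{Rb}$; $R_{ba}+R_{ca}+R_{da}+\Psi(b,c,d)\leq n_{Ra}$; $R_{ab}+R_{cb}+R_{db}+\Psi(a,c,d)\leq n_{Ra}$; $R_{ac}+R_{bc}+R_{dc}+\Psi(a,b,d)\leq n_{Ra}$; $R_{ad}+R_{bd}+R_{cd}+\Psi(a,b,c)\leq n_{Ra}$, and in addition the extra conditions (E1) $\max\{R_{wu}+R_{uv}+R_{vw},\ R_{uw}+R_{wv}+R_{vu}\}+R_{wt}+R_{ut}+R_{vt}\leq n_{uR}$; (E2) $\max\{R_{bc}+R_{cd}+R_{db},\ R_{cb}+R_{bd}+R_{dc}\}+R_{ab}+R_{ac}+R_{ad}\leq n_{Rb}$; (E3) $R_{ij}+R_{jk}+R_{ki}+\max\{R_{li}+R_{lj}+R_{lk},\ R_{il}+R_{jl}+R_{kl}\}\leq n^*$ for every ordering $(i,j,k,l)$ of $\{1,2,3,4\}$; (E4) $R_{ij}+R_{jk}+R_{kl}+R_{li}+\max(R_{jl},R_{lj})+\max(R_{ik},R_{ki})\leq n^*$ for every ordering $(i,j,k,l)$ of $\{1,2,3,4\}$.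
   Context: Network: four users $1,2,3,4$ and a relay with no messages of its own; users have no direct links and communicate only through the relay. User $i$ sends to user $j$ at rate $R_{ij}$ bits per channel use. Linear deterministic model (Avestimehr–Diggavi–Tse) with non-reciprocal nonnegative integer gains: $n_{iR}$ from user $i$ to the relay, $n_{Ri}$ from the relay to user $i$; with $S$ the $q\times q$ down-shift matrix over $\mathbb{F}_2$, the relay receives $\sum_i S^{q-n_{iR}}x_i$ over $\mathbb{F}_2$ (so user $i$ reaches only the top $n_{iR}$ received levels) and user $i$ receives $S^{q-n_{Ri}}x_R$ (only the top $n_{Ri}$ relay levels). Simple Ordering Scheme (SOS): in the uplink, each user sends its message bits uncoded on distinct signal levels, ordered so that for each pair of users $i,j$, $\min(R_{ij},R_{ji})$ bits of the message $i\to j$ and the same number of bits of the message $j\to i$ arrive at the relay on the same received levels (so the relay observes their XORs), all other bits arriving on levels not shared with other bits. The relay does not decode individual bits; it reorders the received equations (XORed pairs or single bits) into four segments and broadcasts them: the segment for user $d$ (lowest downlink levels) consists of, for each $k\in\{a,b,c\}$, $\min(R_{dk},R_{kd})$ XORs of bits of $R_{dk}$ and $R_{kd}$, followed by the remaining $\max(R_{dk},R_{kd})-\min(R_{dk},R_{kd})$ single bits of $R_{kd}$ if $R_{kd}>R_{dk}$; the segments for $c$, $b$, $a$ (in increasing level order) are built in the same way from the bits not already included in lower segments. Each user decodes its intended bits from the levels it receives, using its own transmitted bits to strip XORs. The uplink levels are organized analogously into segments for users $w,v,u,t$. ''Achieves'' means that all messages are correctly decoded at rates $R_{ij}$. *)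

(* Defs.v *)
From mathcomp Require Import all_boot.
Set Implicit Arguments. Unset Strict Implicit. Unset Printing Implicit Defensive.

(* Users 1,2,3,4 are represented by the ordinals 0,1,2,3 of 'I_4. *)
Definition user := 'I_4.

(* Rates: R i j = R_{ij} (bits per channel use from user i to user j);
   the diagonal R i i is never used. *)
Definition rates := user -> user -> nat.

(* A message bit: (source, destination, index k) -- the k-th bit of the
   message source -> destination, with k < R source destination. *)
Definition bit := (user * user * nat)%type.
Definition src (x : bit) : user := x.1.1.
Definition dst (x : bit) : user := x.1.2.

(* For each unordered pair {i,j} (encoded
   with i < j) and each m < max(R_ij, R_ji) there is one equation:
   - if m < min(R_ij,R_ji): the XOR of bit m of i->j and bit m of j->i;
   - otherwise: the single bit m of the longer of the two messages. *)
Definition eqn := (user * user * nat)%type.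

Definition valid_eqn (R : rates) (e : eqn) : bool :=
  let: (i, j, m) := e in (i < j)%N && (m < maxn (R i j) (R j i))%N.

Definition is_xor (R : rates) (e : eqn) : bool :=
  let: (i, j, m) := e in (m < minn (R i j) (R j i))%N.

Definition eqn_bits (R : rates) (e : eqn) : seq bit :=
  let: (i, j, m) := e in
  if (m < minn (R i j) (R j i))%N then [:: (i, j, m); (j, i, m)]
  else if (R j i < R i j)%N then [:: (i, j, m)] else [:: (j, i, m)].

Definition num_eqns (R : rates) : nat :=
  \sum_(i < 4) \sum_(j < 4 | (i < j)%N) maxn (R i j) (R j i).

(* Segment owners.  [sup] is the list of uplink segments from the top relay
   level downwards, i.e. [:: w; v; u; t]; [sdn] is the list of downlink
   segments from the top (most significant) relay level downwards, i.e.
   [:: d; c; b; a].  An XOR of the pair {i,j} belongs to the segment of the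
   weaker of i and j (earlier in the list); a single bit belongs, in the
   uplink, to the segment of its source and, in the downlink, to the segment
   of its destination. *)
Definition owner_up (sup : seq user) (R : rates) (e : eqn) : user :=
  let: (i, j, m) := e in
  if (m < minn (R i j) (R j i))%N then
    (if (index i sup < index j sup)%N then i else j)
  else if (R j i < R i j)%N then i else j.

Definition owner_dn (sdn : seq user) (R : rates) (e : eqn) : user :=
  let: (i, j, m) := e in
  if (m < minn (R i j) (R j i))%N then
    (if (index i sdn < index j sdn)%N then i else j)
  else if (R j i < R i j)%N then j else i.

(* An SOS arrangement: [up e] is the relay level (0 = top) on which the
   relay receives equation e in the uplink, [dn e] the relay level
   (0 = top) on which the relay broadcasts it.  Both are bijections of the
   equations onto the levels 0 .. num_eqns-1 (the relay just reorders the
   received equations), and the equations are grouped into consecutive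
   segments in the order given by [sup] (uplink), resp. [sdn] (downlink).
   The order of equations inside a segment is left free. *)
Definition SOS_arrangement (sup sdn : seq user) (R : rates)
    (up dn : eqn -> nat) : Prop :=
  [/\ forall e, valid_eqn R e -> (up e < num_eqns R)%N,
      forall e e', valid_eqn R e -> valid_eqn R e' -> up e = up e' -> e = e'
    & forall e e', valid_eqn R e -> valid_eqn R e' ->
        (index (owner_up sup R e) sup < index (owner_up sup R e') sup)%N ->
        (up e < up e')%N] /\
  [/\ forall e, valid_eqn R e -> (dn e < num_eqns R)%N,
      forall e e', valid_eqn R e -> valid_eqn R e' -> dn e = dn e' -> e = e'
    & forall e e', valid_eqn R e -> valid_eqn R e' ->
        (index (owner_dn sdn R e) sdn < index (owner_dn sdn R e') sdn)%N ->
        (dn e < dn e')%N].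

(* Success of an arrangement with uplink gains nup (n_{iR} = nup i) and
   downlink gains ndn (n_{Ri} = ndn i):
   - uplink: user i reaches only the top n_{iR} relay levels, so every bit
     of user i must be placed on a relay level < n_{iR};
   - downlink: user j receives the top n_{Rj} relay levels; it decodes bit
     (i,j,k) if some received equation consists of that bit, possibly XORed
     with bits of user j's own messages (which j strips off). *)
Definition SOS_decodes (nup ndn : user -> nat) (R : rates)
    (up dn : eqn -> nat) : Prop :=
  (forall e, valid_eqn R e -> forall x, x \in eqn_bits R e ->
      (up e < nup (src x))%N) /\
  (forall i j : user, i != j -> forall k, (k < R i j)%N ->
     exists e, [/\ valid_eqn R e, (i, j, k) \in eqn_bits R e,
                   (dn e < ndn j)%N
                 & forall x, x \in eqn_bits R e -> x = (i, j, k) \/ src x = j]).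

Definition SOS_achieves (sup sdn : seq user) (nup ndn : user -> nat)
    (R : rates) : Prop :=
  (exists up dn, SOS_arrangement sup sdn R up dn) /\
  (forall up dn, SOS_arrangement sup sdn R up dn ->
     SOS_decodes nup ndn R up dn).

Definition Phi (R : rates) (p q r : user) : nat :=
  maxn (R p q + R p r + maxn (R q r) (R r q))
   (maxn (R q p + R q r + maxn (R p r) (R r p))
         (R r p + R r q + maxn (R p q) (R q p))).

Definition Psi (R : rates) (p q r : user) : nat :=
  maxn (R q p + R r p + maxn (R q r) (R r q))
   (maxn (R p q + R r q + maxn (R p r) (R r p))
         (R p r + R q r + maxn (R p q) (R q p))).

(* Main.v *)
Require Import Defs.
From mathcomp Require Import all_boot zify.
Set Implicit Arguments. Unset Strict Implicit. Unset Printing Implicit Defensive.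

Notation deqn := Defs.eqn.
Definition o0 : user := @Ordinal 4 0 isT.
Definition o1 : user := @Ordinal 4 1 isT.
Definition o2 : user := @Ordinal 4 2 isT.
Definition o3 : user := @Ordinal 4 3 isT.

Lemma ord4 (i : user) : i = o0 \/ i = o1 \/ i = o2 \/ i = o3.
Proof.
case: i => [[|[|[|[|i]]]] Hi] //.
- by left; apply/val_inj.
- by right; left; apply/val_inj.
- by right; right; left; apply/val_inj.
- by right; right; right; apply/val_inj.
Qed.

Definition pr : seq (user * user) :=
  [:: (o0,o1); (o0,o2); (o0,o3); (o1,o2); (o1,o3); (o2,o3)].

Definition blk (R : rates) (p : user * user) : seq deqn :=
  [seq (p.1, p.2, m) | m <- iota 0 (maxn (R p.1 p.2) (R p.2 p.1))].

Definition L (R : rates) : seq deqn := flatten (map (blk R) pr).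

Lemma uniq_flat (T U : eqType) (lab : T -> U) (P : U -> seq T) s :
  uniq s -> (forall p, uniq (P p)) -> (forall p x, x \in P p -> lab x = p) ->
  uniq (flatten (map P s)).
Proof.
move=> us uP lP; elim: s us => //= p s IH /andP[ps us].
rewrite cat_uniq uP IH // andbT; apply/hasPn => x /flatten_mapP[q qs xq].
apply/negP => xp; move: ps; rewrite -(lP _ _ xp) (lP _ _ xq) qs //.
Qed.

Lemma L_uniq R : uniq (L R).
Proof.
apply: (@uniq_flat _ _ (fun e : deqn => (e.1.1, e.1.2))) => //.
- by move=> p; rewrite map_inj_uniq ?iota_uniq // => m m' [].
- by move=> p x /mapP[m _ ->]; case: p.
Qed.

Lemma L_valid R e : (e \in L R) = valid_eqn R e.
Proof.
case: e => [[i j] m]; apply/flatten_mapP/idP.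
- case=> q qp /mapP[m' Hm [-> -> ->]]; rewrite mem_iota in Hm.
  move: qp Hm; rewrite /valid_eqn !inE => /orP[/eqP->|/orP[/eqP->|/orP[/eqP->|/orP[/eqP->|/orP[/eqP->|/eqP->]]]]] /=; lia.
- rewrite /valid_eqn => /andP[ij Hm]; exists (i, j); last first.
    by apply/mapP; exists m; rewrite // mem_iota.
  by case: (ord4 i) ij => [->|[->|[->|->]]]; case: (ord4 j) => [->|[->|[->|->]]].
Qed.

Lemma sum4 (F : 'I_4 -> nat) : \sum_(i < 4) F i = F o0 + F o1 + F o2 + F o3.
Proof.
rewrite !big_ord_recl big_ord0 addn0 !addnA.
by congr (_ + _ + _ + _); congr F; apply/val_inj.
Qed.

Lemma L_size R : size (L R) = num_eqns R.
Proof.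
rewrite /L /num_eqns size_flatten /shape /= !size_map !size_iota.
rewrite sum4; do 4! rewrite big_mkcond sum4 /=. lia.
Qed.
Lemma rank_bound (T : eqType) (s : seq T) (f key : T -> nat) (N : nat) e :
  uniq s -> size s = N -> (forall x, x \in s -> f x < N) -> {in s &, injective f} ->
  (forall x y, x \in s -> y \in s -> key x < key y -> f x < f y) -> e \in s ->
  f e < count (fun x => key x <= key e) s.
Proof.
move=> us sz fN finj ford es.
set G := [seq x <- s | key e < key x].
have: size (map f G) <= size (iota (f e).+1 (N - (f e).+1)).
  apply: uniq_leq_size.
    rewrite map_inj_in_uniq ?filter_uniq // => x y; rewrite !mem_filter.
    by case/andP=> _ xs /andP[_ ys]; apply: finj.
  move=> k /mapP[x]; rewrite mem_filter => /andP[kx xs] ->.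
  rewrite mem_iota; have := ford _ _ es xs kx; have := fN _ xs; lia.
rewrite size_map size_iota.
have := count_predC (fun x => key x <= key e) s.
have -> : count (predC (fun x => key x <= key e)) s = size G.
  by rewrite size_filter; apply: eq_count => x /=; rewrite -ltnNge.
have := fN _ es; lia.
Qed.

Lemma sort_arr (T : eqType) (s : seq T) (key : T -> nat) :
  let f := fun e => index e (sort (fun x y => key x <= key y) s) in
  uniq s ->
  [/\ forall x, x \in s -> f x < size s,
      {in s &, injective f} &
      forall x y, x \in s -> y \in s -> key x < key y -> f x < f y].
Proof.
move=> f us; set ss := sort (fun x y => key x <= key y) s.
have mss x : (x \in ss) = (x \in s) by rewrite mem_sort.
have sss : sorted (fun x y => key x <= key y) ss.
  by apply: sort_sorted => x y; apply: leq_total.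
split.
- move=> x xs; rewrite /f -/ss -(size_sort (fun x y => key x <= key y) s) -/ss.
  by rewrite index_mem mss.
- move=> x y xs ys; rewrite /f -/ss => E; have := @index_inj T x ss x y; rewrite !mss; by apply.
- move=> x y xs ys kxy; rewrite /f -/ss ltnNge leq_eqVlt; apply/negP => /orP[/eqP|].
  + by move/(@index_inj T x ss); rewrite !mss => /(_ ys xs) E; move: kxy; rewrite E ltnn.
  + have tr : transitive (fun x y : T => key x <= key y).
      by move=> a b c; apply: leq_trans.
    move/(sorted_ltn_index tr sss); rewrite !mss => /(_ ys xs); rewrite leqNgt kxy //.
Qed.
Definition own (f : bool) (s : seq user) (R : rates) (e : Defs.eqn) : user :=
  if f then owner_dn s R e else owner_up s R e.

Definition g (f : bool) (s : seq user) (R : rates) (p : nat) (i j : user) : nat :=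
  count (fun m => index (own f s R (i, j, m)) s <= p) (iota 0 (maxn (R i j) (R j i))).

Definition hh (f : bool) (s : seq user) (R : rates) (p : nat) (x y : user) : nat :=
  if index y s <= p then maxn (R x y) (R y x)
  else if index x s <= p then (if f then R y x else R x y) else 0.

Lemma count_const (T : Type) (a : bool) (s : seq T) : count (fun _ => a) s = a * size s.
Proof. by case: a; rewrite ?count_predT ?count_pred0 ?mul1n ?mul0n. Qed.

Lemma count_ite (a b : bool) mn mx : mn <= mx ->
  count (fun m => if m < mn then a else b) (iota 0 mx) = a * mn + b * (mx - mn).
Proof.
move=> le; rewrite -(subnKC le) iotaD count_cat add0n.
rewrite (@eq_in_count _ _ (fun _ => a)); last by move=> m; rewrite mem_iota add0n => /andP[_ h] /=; rewrite h.
rewrite [count _ (iota mn _)](@eq_in_count _ _ (fun _ => b)); last by move=> m; rewrite mem_iota => /andP[h _] /=; rewrite ltnNge h.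
by rewrite !count_const !size_iota subnKC // addKn.
Qed.

Definition Gs (s : seq user) (H : user -> user -> nat) i j :=
  if index i s < index j s then H i j else H j i.

Lemma g_formula f s R p i j : index i s != index j s ->
  g f s R p i j = Gs s (hh f s R p) i j.
Proof.
move=> ne; rewrite /g /Gs /hh.
rewrite (@eq_count _ _ (fun m => if m < minn (R i j) (R j i) then
   index (if index i s < index j s then i else j) s <= p else
   index (if f then (if R j i < R i j then j else i) else (if R j i < R i j then i else j)) s <= p)); last first.
  by move=> m /=; rewrite /own /owner_dn /owner_up; case: f; case: ifP.
rewrite count_ite ?geq_min ?leq_maxl //.
move: ne; case: f; rewrite !(fun_if (fun x => index x s)) => ne;
case: (ltnP (index i s) (index j s)) => h1; case: (ltnP (R j i) (R i j)) => h2;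
case: (leqP (index i s) p) => h3; case: (leqP (index j s) p) => h4 /=; lia.
Qed.

Lemma count_L f s R p : count (fun e => index (own f s R e) s <= p) (L R) =
  g f s R p o0 o1 + (g f s R p o0 o2 + (g f s R p o0 o3 + (g f s R p o1 o2 +
  (g f s R p o1 o3 + (g f s R p o2 o3 + 0))))).
Proof. by rewrite /L /= !count_cat !count_map. Qed.

Lemma perm_sum (s0 s1 s2 s3 : user) (H : user -> user -> nat) :
  uniq [:: s0; s1; s2; s3] ->
  let G := Gs [:: s0; s1; s2; s3] H in
  G o0 o1 + (G o0 o2 + (G o0 o3 + (G o1 o2 + (G o1 o3 + (G o2 o3 + 0))))) =
  H s0 s1 + H s0 s2 + H s0 s3 + H s1 s2 + H s1 s3 + H s2 s3.
Proof.
case: (ord4 s0) => [->|[->|[->|->]]]; case: (ord4 s1) => [->|[->|[->|->]]];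
case: (ord4 s2) => [->|[->|[->|->]]]; case: (ord4 s3) => [->|[->|[->|->]]] //= _;
rewrite /Gs /=; lia.
Qed.

Lemma perm4 (s0 s1 s2 s3 : user) : uniq [:: s0; s1; s2; s3] ->
  let s := [:: s0; s1; s2; s3] in
  [/\ index s0 s = 0, index s1 s = 1, index s2 s = 2, index s3 s = 3
    & forall x, x \in s].
Proof.
case: (ord4 s0) => [->|[->|[->|->]]]; case: (ord4 s1) => [->|[->|[->|->]]];
case: (ord4 s2) => [->|[->|[->|->]]]; case: (ord4 s3) => [->|[->|[->|->]]] //= _;
split => // x; case: (ord4 x) => [->|[->|[->|->]]] //.
Qed.

Definition Hq (f : bool) (R : rates) p (x y : user) (a b : nat) :=
  if b <= p then maxn (R x y) (R y x)
  else if a <= p then (if f then R y x else R x y) else 0.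

Lemma cnt_formula f s0 s1 s2 s3 R p : uniq [:: s0; s1; s2; s3] ->
  count (fun e => index (own f [:: s0; s1; s2; s3] R e) [:: s0; s1; s2; s3] <= p) (L R) =
  Hq f R p s0 s1 0 1 + Hq f R p s0 s2 0 2 + Hq f R p s0 s3 0 3 +
  Hq f R p s1 s2 1 2 + Hq f R p s1 s3 1 3 + Hq f R p s2 s3 2 3.
Proof.
move=> U; have [i0 i1 i2 i3 mem] := perm4 U.
have ne (x y : user) : x != y -> index x [:: s0; s1; s2; s3] != index y [:: s0; s1; s2; s3].
  by apply: contra => /eqP/(@index_inj _ x) -> //.
rewrite count_L !g_formula ?ne //.
rewrite (perm_sum (hh f [:: s0; s1; s2; s3] R p) U) /hh /Hq i0 i1 i2 i3.
by [].
Qed.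

Lemma mono4 (N : user -> nat) (s0 s1 s2 s3 : user) a b :
  N s0 <= N s1 -> N s1 <= N s2 -> N s2 <= N s3 -> a <= b -> b < 4 ->
  N (nth s0 [:: s0; s1; s2; s3] a) <= N (nth s0 [:: s0; s1; s2; s3] b).
Proof.
move=> h1 h2 h3; case: b => [|[|[|[|b]]]]; case: a => [|[|[|[|a]]]] //= _ _; lia.
Qed.

Lemma owner_src_up s R e x : valid_eqn R e -> x \in eqn_bits R e ->
  index (owner_up s R e) s <= index (src x) s.
Proof.
case: e => [[i j] m] /= _; rewrite /owner_up /eqn_bits; case: ifP => h.
- rewrite !inE; by case/orP => /eqP -> /=; rewrite /src /=; case: ltnP => //= ?; lia.
- by case: ifP => _; rewrite inE => /eqP -> /=; rewrite /src.
Qed.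

Lemma dn_eqn s R (i j : user) k : i != j -> k < R i j ->
  let e : Defs.eqn := if (i < j)%N then (i, j, k) else (j, i, k) in
  [/\ valid_eqn R e, (i, j, k) \in eqn_bits R e,
      forall x, x \in eqn_bits R e -> x = (i, j, k) \/ src x = j
    & index (owner_dn s R e) s <= index j s].
Proof.
move=> ne kl /=; case: ltngtP => h.
- rewrite /valid_eqn /eqn_bits /owner_dn h /=; split.
  + lia.
  + by case: ifP => h1; rewrite ?inE ?eqxx //; case: ifP => h2; rewrite ?inE ?eqxx //; lia.
  + move=> x; case: ifP => h1; rewrite ?inE; first by case/orP => /eqP ->; [left|right].
    by case: ifP => h2; rewrite ?inE => /eqP ->; [left|right].
  + case: ifP => h1; first by case: ltnP => //= ?; lia.
    by case: ifP => h2 //; lia.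
- rewrite /valid_eqn /eqn_bits /owner_dn h /=; split.
  + lia.
  + by case: ifP => h1; rewrite ?inE ?eqxx ?orbT //; case: ifP => h2; rewrite ?inE ?eqxx //; lia.
  + move=> x; case: ifP => h1; rewrite ?inE; first by case/orP => /eqP ->; [right|left].
    by case: ifP => h2; rewrite ?inE => /eqP ->; [right|left].
  + case: ifP => h1; first by case: ltnP => //= ?; lia.
    by case: ifP => h2 //; lia.
- by move: ne; rewrite (val_inj h) eqxx.
Qed.

Lemma up_decode (s0 s1 s2 s3 : user) (nup : user -> nat) (R : rates) (up : Defs.eqn -> nat) :
  uniq [:: s0; s1; s2; s3] ->
  (forall p, p < 4 -> count (fun e => index (own false [:: s0; s1; s2; s3] R e)
       [:: s0; s1; s2; s3] <= p) (L R) <= nup (nth s0 [:: s0; s1; s2; s3] p)) ->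
  nup s0 <= nup s1 -> nup s1 <= nup s2 -> nup s2 <= nup s3 ->
  [/\ forall e, valid_eqn R e -> (up e < num_eqns R)%N,
      forall e e', valid_eqn R e -> valid_eqn R e' -> up e = up e' -> e = e'
    & forall e e', valid_eqn R e -> valid_eqn R e' ->
        (index (owner_up [:: s0; s1; s2; s3] R e) [:: s0; s1; s2; s3] <
         index (owner_up [:: s0; s1; s2; s3] R e') [:: s0; s1; s2; s3])%N ->
        (up e < up e')%N] ->
  forall e, valid_eqn R e -> forall x, x \in eqn_bits R e -> up e < nup (src x).
Proof.
set s := [:: s0; s1; s2; s3].
move=> U B m1 m2 m3 [A1 A2 A3] e ve x xb.
have [_ _ _ _ mem] := perm4 U.
have eL : e \in L R by rewrite L_valid.
have H := @rank_bound _ (L R) up (fun e => index (own false s R e) s) (num_eqns R) e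
  (L_uniq R) (L_size R).
have {}H : up e < count (fun y => index (own false s R y) s <= index (own false s R e) s) (L R).
  apply: H => //.
  - by move=> y; rewrite L_valid; apply: A1.
  - by move=> y z; rewrite !L_valid; apply: A2.
  - by move=> y z; rewrite !L_valid; apply: A3.
have k4 : index (own false s R e) s < 4 by rewrite -[4]/(size s) index_mem mem.
have Bk := B _ k4.
have kle : index (own false s R e) s <= index (src x) s by apply: owner_src_up.
have sx4 : index (src x) s < 4 by rewrite -[4]/(size s) index_mem mem.
have Mo := mono4 m1 m2 m3 kle sx4.
rewrite !nth_index ?mem // in Mo Bk.
exact: leq_trans H (leq_trans Bk Mo).
Qed.

Lemma dn_decode (s0 s1 s2 s3 : user) (ndn : user -> nat) (R : rates) (dn : Defs.eqn -> nat) :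
  uniq [:: s0; s1; s2; s3] ->
  (forall p, p < 4 -> count (fun e => index (own true [:: s0; s1; s2; s3] R e)
       [:: s0; s1; s2; s3] <= p) (L R) <= ndn (nth s0 [:: s0; s1; s2; s3] p)) ->
  ndn s0 <= ndn s1 -> ndn s1 <= ndn s2 -> ndn s2 <= ndn s3 ->
  [/\ forall e, valid_eqn R e -> (dn e < num_eqns R)%N,
      forall e e', valid_eqn R e -> valid_eqn R e' -> dn e = dn e' -> e = e'
    & forall e e', valid_eqn R e -> valid_eqn R e' ->
        (index (owner_dn [:: s0; s1; s2; s3] R e) [:: s0; s1; s2; s3] <
         index (owner_dn [:: s0; s1; s2; s3] R e') [:: s0; s1; s2; s3])%N ->
        (dn e < dn e')%N] ->
  forall i j : user, i != j -> forall k, (k < R i j)%N ->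
     exists e, [/\ valid_eqn R e, (i, j, k) \in eqn_bits R e,
                   (dn e < ndn j)%N
                 & forall x, x \in eqn_bits R e -> x = (i, j, k) \/ src x = j].
Proof.
set s := [:: s0; s1; s2; s3].
move=> U B m1 m2 m3 [A1 A2 A3] i j ij k kl.
have [_ _ _ _ mem] := perm4 U.
have [ve eb ex ow] := dn_eqn s ij kl.
set e : Defs.eqn := if (i < j)%N then (i, j, k) else (j, i, k).
exists e; split => //.
have eL : e \in L R by rewrite L_valid.
have H := @rank_bound _ (L R) dn (fun e => index (own true s R e) s) (num_eqns R) e
  (L_uniq R) (L_size R).
have {}H : dn e < count (fun y => index (own true s R y) s <= index (own true s R e) s) (L R).
  apply: H => //.
  - by move=> y; rewrite L_valid; apply: A1.
  - by move=> y z; rewrite !L_valid; apply: A2.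
  - by move=> y z; rewrite !L_valid; apply: A3.
have k4 : index (own true s R e) s < 4 by rewrite -[4]/(size s) index_mem mem.
have Bk := B _ k4.
have sx4 : index j s < 4 by rewrite -[4]/(size s) index_mem mem.
have Mo := mono4 m1 m2 m3 ow sx4.
rewrite !nth_index ?mem // in Mo Bk.
exact: leq_trans H (leq_trans Bk Mo).
Qed.
Lemma uq4 (i j k l p q r s : user) : uniq [:: p; q; r; s] ->
  perm_eq [:: i; j; k; l] [:: p; q; r; s] -> uniq [:: i; j; k; l].
Proof. by move=> U P; rewrite (perm_uniq P). Qed.

Ltac uq U := apply: (uq4 _ U); apply/permP => ? /=; lia.

Ltac linH H := rewrite /Phi /Psi ?addn_maxr ?addn_maxl ?geq_max in H.
Ltac splitb := repeat match goal with H : is_true (_ && _) |- _ => case/andP: H => ? ? end.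

Lemma tour (Q : user -> user -> nat) (p q r s : user) (n : nat) :
  uniq [:: p; q; r; s] ->
  (Q p q + Q p r + Q p s + Phi Q q r s <= n) ->
  (Q q p + Q q r + Q q s + Phi Q p r s <= n) ->
  (Q r p + Q r q + Q r s + Phi Q p q s <= n) ->
  (Q s p + Q s q + Q s r + Phi Q p q r <= n) ->
  (forall i j k l : user, uniq [:: i; j; k; l] ->
     (Q i j + Q j k + Q k i
        + maxn (Q l i + Q l j + Q l k) (Q i l + Q j l + Q k l) <= n)) ->
  (forall i j k l : user, uniq [:: i; j; k; l] ->
     (Q i j + Q j k + Q k l + Q l i
        + maxn (Q j l) (Q l j) + maxn (Q i k) (Q k i) <= n)) ->
  maxn (Q s r) (Q r s) + maxn (Q s q) (Q q s) + maxn (Q s p) (Q p s) +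
  maxn (Q r q) (Q q r) + maxn (Q r p) (Q p r) + maxn (Q q p) (Q p q) <= n.
Proof.
move=> U H1 H2 H3 H4 E3 E4.
have a1 := E3 p q r s (uq4 U (perm_refl _)).
have a2 : _ := E3 p r q s (uq4 U (_ : perm_eq [:: p; r; q; s] [:: p; q; r; s])).
have a3 : _ := E3 p q s r (uq4 U (_ : perm_eq [:: p; q; s; r] [:: p; q; r; s])).
have a4 : _ := E3 p s q r (uq4 U (_ : perm_eq [:: p; s; q; r] [:: p; q; r; s])).
have a5 : _ := E3 p r s q (uq4 U (_ : perm_eq [:: p; r; s; q] [:: p; q; r; s])).
have a6 : _ := E3 p s r q (uq4 U (_ : perm_eq [:: p; s; r; q] [:: p; q; r; s])).
have a7 : _ := E3 q r s p (uq4 U (_ : perm_eq [:: q; r; s; p] [:: p; q; r; s])).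
have a8 : _ := E3 q s r p (uq4 U (_ : perm_eq [:: q; s; r; p] [:: p; q; r; s])).
have b1 := E4 p q r s (uq4 U (perm_refl _)).
have b2 : _ := E4 p q s r (uq4 U (_ : perm_eq [:: p; q; s; r] [:: p; q; r; s])).
have b3 : _ := E4 p r q s (uq4 U (_ : perm_eq [:: p; r; q; s] [:: p; q; r; s])).
have b4 : _ := E4 p r s q (uq4 U (_ : perm_eq [:: p; r; s; q] [:: p; q; r; s])).
have b5 : _ := E4 p s q r (uq4 U (_ : perm_eq [:: p; s; q; r] [:: p; q; r; s])).
have b6 : _ := E4 p s r q (uq4 U (_ : perm_eq [:: p; s; r; q] [:: p; q; r; s])).
have Pa2 : perm_eq [:: p; r; q; s] [:: p; q; r; s] by clear -p q r s; apply/permP => x /=; lia.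
move/(_ Pa2): a2 => a2.
have Pa3 : perm_eq [:: p; q; s; r] [:: p; q; r; s] by clear -p q r s; apply/permP => x /=; lia.
move/(_ Pa3): a3 => a3.
have Pa4 : perm_eq [:: p; s; q; r] [:: p; q; r; s] by clear -p q r s; apply/permP => x /=; lia.
move/(_ Pa4): a4 => a4.
have Pa5 : perm_eq [:: p; r; s; q] [:: p; q; r; s] by clear -p q r s; apply/permP => x /=; lia.
move/(_ Pa5): a5 => a5.
have Pa6 : perm_eq [:: p; s; r; q] [:: p; q; r; s] by clear -p q r s; apply/permP => x /=; lia.
move/(_ Pa6): a6 => a6.
have Pa7 : perm_eq [:: q; r; s; p] [:: p; q; r; s] by clear -p q r s; apply/permP => x /=; lia.
move/(_ Pa7): a7 => a7.
have Pa8 : perm_eq [:: q; s; r; p] [:: p; q; r; s] by clear -p q r s; apply/permP => x /=; lia.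
move/(_ Pa8): a8 => a8.
have Pb2 : perm_eq [:: p; q; s; r] [:: p; q; r; s] by clear -p q r s; apply/permP => x /=; lia.
move/(_ Pb2): b2 => b2.
have Pb3 : perm_eq [:: p; r; q; s] [:: p; q; r; s] by clear -p q r s; apply/permP => x /=; lia.
move/(_ Pb3): b3 => b3.
have Pb4 : perm_eq [:: p; r; s; q] [:: p; q; r; s] by clear -p q r s; apply/permP => x /=; lia.
move/(_ Pb4): b4 => b4.
have Pb5 : perm_eq [:: p; s; q; r] [:: p; q; r; s] by clear -p q r s; apply/permP => x /=; lia.
move/(_ Pb5): b5 => b5.
have Pb6 : perm_eq [:: p; s; r; q] [:: p; q; r; s] by clear -p q r s; apply/permP => x /=; lia.
move/(_ Pb6): b6 => b6.
clear E3 E4.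
linH H1. linH H2. linH H3. linH H4.
linH a1. linH a2. linH a3. linH a4. linH a5. linH a6. linH a7. linH a8.
linH b1. linH b2. linH b3. linH b4. linH b5. linH b6.
rewrite ?addn_maxr ?addn_maxl ?geq_max.
splitb; clear U.
clear Pa2. clear Pa3. clear Pa4. clear Pa5. clear Pa6. clear Pa7. clear Pa8. clear Pb2. clear Pb3. clear Pb4. clear Pb5. clear Pb6.
set (x0 := Q p q) in *. clearbody x0.
set (x1 := Q q p) in *. clearbody x1.
set (x2 := Q p r) in *. clearbody x2.
set (x3 := Q r p) in *. clearbody x3.
set (x4 := Q p s) in *. clearbody x4.
set (x5 := Q s p) in *. clearbody x5.
set (x6 := Q q r) in *. clearbody x6.
set (x7 := Q r q) in *. clearbody x7.
set (x8 := Q q s) in *. clearbody x8.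
set (x9 := Q s q) in *. clearbody x9.
set (x10 := Q r s) in *. clearbody x10.
set (x11 := Q s r) in *. clearbody x11.
repeat (apply/andP; split); lia.
Qed.

Ltac absR R := repeat match goal with
 | |- context [R ?x ?y] => let z := fresh "z" in set (z := R x y) in *; clearbody z
 | H : context [R ?x ?y] |- _ => let z := fresh "z" in set (z := R x y) in *; clearbody z
 end.

Lemma up_p2 (R : rates) (t u v w : user) n :
  R u t + R v t + R w t + Phi R u v w <= n ->
  maxn (R w u + R u v + R v w) (R u w + R w v + R v u) + R w t + R u t + R v t <= n ->
  maxn (R w v) (R v w) + maxn (R w u) (R u w) + R w t + maxn (R v u) (R u v) + R v t + R u t <= n.
Proof.
move=> H1 H2; linH H1; linH H2; rewrite ?addn_maxr ?addn_maxl ?geq_max; splitb; absR R.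
repeat (apply/andP; split); lia.
Qed.

Lemma dn_p2 (R : rates) (a b c d : user) n :
  R a b + R a c + R a d + Psi R b c d <= n ->
  maxn (R b c + R c d + R d b) (R c b + R b d + R d c) + R a b + R a c + R a d <= n ->
  maxn (R d c) (R c d) + maxn (R d b) (R b d) + R a d + maxn (R c b) (R b c) + R a c + R a b <= n.
Proof.
move=> H1 H2; linH H1; linH H2; rewrite ?addn_maxr ?addn_maxl ?geq_max; splitb; absR R.
repeat (apply/andP; split); lia.
Qed.

Lemma PhiT (R : rates) p q r : Phi (fun x y => R y x) p q r = Psi R p q r.
Proof. by rewrite /Phi /Psi /= (maxnC (R r q)) (maxnC (R r p)) (maxnC (R q p)). Qed.

Lemma E3T (R : rates) n :
  (forall i j k l : user, uniq [:: i; j; k; l] ->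
     (R i j + R j k + R k i
        + maxn (R l i + R l j + R l k) (R i l + R j l + R k l) <= n)) ->
  (forall i j k l : user, uniq [:: i; j; k; l] ->
     (R j i + R k j + R i k
        + maxn (R i l + R j l + R k l) (R l i + R l j + R l k) <= n)).
Proof.
move=> E i j k l U.
have P : perm_eq [:: i; k; j; l] [:: i; j; k; l] by clear; apply/permP => x /=; lia.
have := E i k j l (uq4 U P); clear E P U; absR R; lia.
Qed.

Lemma E4T (R : rates) n :
  (forall i j k l : user, uniq [:: i; j; k; l] ->
     (R i j + R j k + R k l + R l i
        + maxn (R j l) (R l j) + maxn (R i k) (R k i) <= n)) ->
  (forall i j k l : user, uniq [:: i; j; k; l] ->
     (R j i + R k j + R l k + R i l
        + maxn (R l j) (R j l) + maxn (R k i) (R i k) <= n)).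
Proof.
move=> E i j k l U.
have P : perm_eq [:: i; l; k; j] [:: i; j; k; l] by clear; apply/permP => x /=; lia.
have := E i l k j (uq4 U P); clear E P U; absR R; lia.
Qed.

Unset Implicit Arguments.
Unset Strict Implicit.

Theorem lemma1 (t u v w a b c d : user) (nup ndn : user -> nat) (R : rates) :
  uniq [:: t; u; v; w] -> uniq [:: a; b; c; d] ->
  (nup w <= nup v)%N -> (nup v <= nup u)%N -> (nup u <= nup t)%N ->
  (ndn d <= ndn c)%N -> (ndn c <= ndn b)%N -> (ndn b <= ndn a)%N ->
  let nstar := minn (nup t) (ndn a) in
  (R w t + R w u + R w v <= nup w)%N ->
  (R a d + R b d + R c d <= ndn d)%N ->
  (R w t + R w u + R v t + R v u + maxn (R v w) (R w v) <= nup v)%N ->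
  (R a d + R b d + R a c + R b c + maxn (R c d) (R d c) <= ndn c)%N ->
  (R u t + R v t + R w t + Phi R u v w <= nup u)%N ->
  (R t u + R t v + R t w + Phi R u v w <= nup t)%N ->
  (R u t + R u v + R u w + Phi R t v w <= nup t)%N ->
  (R v t + R v u + R v w + Phi R t u w <= nup t)%N ->
  (R w t + R w u + R w v + Phi R t u v <= nup t)%N ->
  (R a b + R a c + R a d + Psi R b c d <= ndn b)%N ->
  (R b a + R c a + R d a + Psi R b c d <= ndn a)%N ->
  (R a b + R c b + R d b + Psi R a c d <= ndn a)%N ->
  (R a c + R b c + R d c + Psi R a b d <= ndn a)%N ->
  (R a d + R b d + R c d + Psi R a b c <= ndn a)%N ->
  (* (E1) *)
  (maxn (R w u + R u v + R v w) (R u w + R w v + R v u)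
     + R w t + R u t + R v t <= nup u)%N ->
  (* (E2) *)
  (maxn (R b c + R c d + R d b) (R c b + R b d + R d c)
     + R a b + R a c + R a d <= ndn b)%N ->
  (* (E3) *)
  (forall i j k l : user, uniq [:: i; j; k; l] ->
     (R i j + R j k + R k i
        + maxn (R l i + R l j + R l k) (R i l + R j l + R k l) <= nstar)%N) ->
  (* (E4) *)
  (forall i j k l : user, uniq [:: i; j; k; l] ->
     (R i j + R j k + R k l + R l i
        + maxn (R j l) (R l j) + maxn (R i k) (R k i) <= nstar)%N) ->
  SOS_achieves [:: w; v; u; t] [:: d; c; b; a] nup ndn R.
Proof.
move=> Ut Ua n1 n2 n3 d1 d2 d3 nstar Hw Hd Hv Hc Hu Ht1 Ht2 Ht3 Ht4 Hb Ha1 Ha2 Ha3 Ha4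
  E1 E2 E3 E4.
have Pw : perm_eq [:: w; v; u; t] [:: t; u; v; w] by clear; apply/permP => x /=; lia.
have Pd : perm_eq [:: d; c; b; a] [:: a; b; c; d] by clear; apply/permP => x /=; lia.
have Uw := uq4 Ut Pw; have Ud := uq4 Ua Pd.
have E3u : forall i j k l : user, uniq [:: i; j; k; l] ->
     (R i j + R j k + R k i
        + maxn (R l i + R l j + R l k) (R i l + R j l + R k l) <= nup t).
  by move=> i j k l U; apply: leq_trans (E3 i j k l U) _; apply: geq_minl.
have E4u : forall i j k l : user, uniq [:: i; j; k; l] ->
     (R i j + R j k + R k l + R l i
        + maxn (R j l) (R l j) + maxn (R i k) (R k i) <= nup t).
  by move=> i j k l U; apply: leq_trans (E4 i j k l U) _; apply: geq_minl.
have E3d : forall i j k l : user, uniq [:: i; j; k; l] ->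
     (R i j + R j k + R k i
        + maxn (R l i + R l j + R l k) (R i l + R j l + R k l) <= ndn a).
  by move=> i j k l U; apply: leq_trans (E3 i j k l U) _; apply: geq_minr.
have E4d : forall i j k l : user, uniq [:: i; j; k; l] ->
     (R i j + R j k + R k l + R l i
        + maxn (R j l) (R l j) + maxn (R i k) (R k i) <= ndn a).
  by move=> i j k l U; apply: leq_trans (E4 i j k l U) _; apply: geq_minr.
clear E3 E4.
split.
- pose ku := fun e => index (owner_up [:: w; v; u; t] R e) [:: w; v; u; t].
  pose kd := fun e => index (owner_dn [:: d; c; b; a] R e) [:: d; c; b; a].
  have [u1 u2 u3] := sort_arr ku (L_uniq R).
  have [v1 v2 v3] := sort_arr kd (L_uniq R).
  exists (fun e => index e (sort (fun x y => ku x <= ku y) (L R))).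
  exists (fun e => index e (sort (fun x y => kd x <= kd y) (L R))).
  split; split.
  + by move=> e; rewrite -L_valid -L_size; apply: u1.
  + by move=> e e'; rewrite -!L_valid; apply: u2.
  + by move=> e e'; rewrite -!L_valid; apply: u3.
  + by move=> e; rewrite -L_valid -L_size; apply: v1.
  + by move=> e e'; rewrite -!L_valid; apply: v2.
  + by move=> e e'; rewrite -!L_valid; apply: v3.
- move=> up dn [Aup Adn]; split.
  + apply: (up_decode Uw _ n1 n2 n3 Aup) => p.
    rewrite cnt_formula // /Hq.
    case: p => [|[|[|[|p]]]] //= _.
    * clear -Hw; absR R; lia.
    * clear -Hv; absR R; lia.
    * exact: up_p2 Hu E1.
    * exact: (tour Ut Ht1 Ht2 Ht3 Ht4 E3u E4u).
  + apply: (dn_decode Ud _ d1 d2 d3 Adn) => p.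
    rewrite cnt_formula // /Hq.
    case: p => [|[|[|[|p]]]] //= _.
    * clear -Hd; absR R; lia.
    * clear -Hc; absR R; lia.
    * exact: dn_p2 Hb E2.
    * have := tour (Q := fun x y => R y x) Ua.
      rewrite !PhiT => /(_ (ndn a) Ha1 Ha2 Ha3 Ha4 (E3T E3d) (E4T E4d)) /=.
      by rewrite (maxnC (R d c)) (maxnC (R d b)) (maxnC (R d a)) (maxnC (R c b))
        (maxnC (R c a)) (maxnC (R b a)).
Qed.
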